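(* Let $\mathfrak{d}\geq 2$ be an integer, $c>0$, $\lambda>0$, and let $p_{\mathbf{X}_{\mathfrak{d}}}(\mathbf{x},t)$ denote the density of the absolutely continuous component of the law of the random flight $\mathbf{X}_{\mathfrak{d}}(t)$ described in the context. Define, for $t>0$ and $\mathbf{x}\in\mathbb{R}^{\mathfrak{d}}$ with $\|\mathbf{x}\|<ct$, $$f(\mathbf{x},t)=\pi^{\mathfrak{d}/2}(ct)^{\mathfrak{d}-2}\,E_{\frac{\mathfrak{d}-1}{2},\frac{\mathfrak{d}}{2},\frac{\mathfrak{d}-1}{2},\frac{\mathfrak{d}-1}{2}}\!\left(\left(\tfrac{\lambda t}{2}\right)^{\mathfrak{d}-1}\right)p_{\mathbf{X}_{\mathfrak{d}}}(\mathbf{x},t).$$ Then $$f(\mathbf{x},t)=\sum_{k=1}^{\infty}\left(\frac{\lambda}{2c}\right)^{k(\mathfrak{d}-1)}\frac{(c^2t^2-\|\mathbf{x}\|^2)^{\frac{k}{2}(\mathfrak{d}-1)-1}}{\Gamma\!\left(\frac{k}{2}(\mathfrak{d}-1)\right)\Gamma\!\left(\frac{\mathfrak{d}-1}{2}(k+1)\right)},$$ and $u=f$ solves the higher order Klein–Gordon equation $$\left(\frac{\partial^2}{\partial t^2}-c^2\Delta\right)^{\mathfrak{d}-1}u(\mathbf{x},t)=\lambda^{2(\mathfrak{d}-1)}u(\mathbf{x},t),\qquad \Delta=\sum_{j=1}^{\mathfrak{d}}\frac{\partial^2}{\partial x_j^2},$$ in the region $\{(\mathbf{x},t):t>0,\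 \|\mathbf{x}\|<ct\}$.
   Context: Random flight $\mathbf{X}_{\mathfrak{d}}(t)$ in $\mathbb{R}^{\mathfrak{d}}$: a particle starts at the origin at time $0$ and moves with constant speed $c>0$; it changes direction $\mathfrak{N}_{\mathfrak{d}}(t)$ times in $(0,t)$; the successive directions are independent and uniformly distributed on the unit sphere $S^{\mathfrak{d}-1}$. Given $\mathfrak{N}_{\mathfrak{d}}(t)=k$, the durations $\tau_1,\dots,\tau_{k+1}$ of the $k+1$ straight segments ($\tau_{k+1}=t-\sum_{j=1}^k\tau_j$) have joint density $\frac{\Gamma((k+1)(\mathfrak{d}-1))}{[\Gamma(\mathfrak{d}-1)]^{k+1}}\frac{1}{t^{(k+1)(\mathfrak{d}-1)-1}}\prod_{j=1}^{k+1}\tau_j^{\mathfrak{d}-2}$ (a Dirichlet law with parameters $(\mathfrak{d}-1,\dots,\mathfrak{d}-1)$ rescaled to total $t$), independent of the directions. The number of changes has law $P\{\mathfrak{N}_{\mathfrak{d}}(t)=k\}=\frac{1}{E_{\mathfrak{d}-1,\mathfrak{d}-1}((\lambda t)^{\mathfrak{d}-1})}\frac{(\lambda t)^{k(\mathfrak{d}-1)}}{\Gamma((k+1)(\mathfrak{d}-1))}$, $k=0,1,2,\dots$, where $E_{\alpha,\beta}(x)=\sum_{k\ge0}x^k/\Gamma(\alpha k+\beta)$. It is known that, for $k\geq1$, the conditional law of $\mathbf{X}_{\mathfrak{d}}(t)$ given $\mathfrak{N}_{\mathfrak{d}}(t)=k$ has density $p(\mathbf{x},t;k)=\frac{\Gamma(\frac{k+1}{2}(\mathfrak{d}-1)+\frac12)}{\Gamma(\frac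 k2(\mathfrak{d}-1))}\frac{(c^2t^2-\|\mathbf{x}\|^2)^{\frac k2(\mathfrak{d}-1)-1}}{\pi^{\mathfrak{d}/2}(ct)^{(k+1)(\mathfrak{d}-1)-1}}$ on $\|\mathbf{x}\|<ct$. The absolutely continuous component of the law of $\mathbf{X}_{\mathfrak{d}}(t)$ has density $p_{\mathbf{X}_{\mathfrak{d}}}(\mathbf{x},t)=\sum_{k\ge1}p(\mathbf{x},t;k)P\{\mathfrak{N}_{\mathfrak{d}}(t)=k\}$. The multi-index Mittag-Leffler function used is $E_{\frac{\mathfrak{d}-1}{2},\frac{\mathfrak{d}}{2},\frac{\mathfrak{d}-1}{2},\frac{\mathfrak{d}-1}{2}}(z)=\sum_{k=0}^\infty\frac{z^k}{\Gamma(\frac{k+1}{2}(\mathfrak{d}-1)+\frac12)\Gamma(\frac{\mathfrak{d}-1}{2}(k+1))}$. *)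

(* Defs.v *)
From Stdlib Require Import Reals List.
From Coquelicot Require Import Coquelicot.
Open Scope R_scope.

Definition Gamma (s : R) : R :=
  RInt_gen (fun x => Rpower x (s - 1) * exp (- x)) (at_right 0) (Rbar_locally p_infty).

Definition ML2 (a b z : R) : R :=
  Series (fun k => z ^ k / Gamma (a * INR k + b)).

(** multi-index Mittag-Leffler function
    E_{(d-1)/2, d/2, (d-1)/2, (d-1)/2}(z)
      = sum_k z^k / (Gamma((k+1)(d-1)/2 + 1/2) Gamma((d-1)(k+1)/2)) *)
Definition ML4 (d : nat) (z : R) : R :=
  Series (fun k => z ^ k /
    (Gamma (INR (k + 1) / 2 * INR (d - 1) + / 2) *
     Gamma (INR (d - 1) / 2 * INR (k + 1)))).

(** points of R^d are represented by functions nat -> R; only the coordinates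
    0 .. d-1 are used. *)
Fixpoint sum_lt (n : nat) (f : nat -> R) : R :=
  match n with O => 0 | S m => sum_lt m f + f m end.

Definition norm_d (d : nat) (x : nat -> R) : R := sqrt (sum_lt d (fun j => x j ^ 2)).

(** law of the number of changes of direction N_d(t) *)
Definition probN (d : nat) (lam t : R) (k : nat) : R :=
  / ML2 (INR (d - 1)) (INR (d - 1)) ((lam * t) ^ (d - 1)) *
  ((lam * t) ^ (k * (d - 1)) / Gamma (INR ((k + 1) * (d - 1)))).

(** conditional density p(x,t;k) of X_d(t) given N_d(t) = k, for k >= 1 *)
Definition p_cond (d : nat) (c : R) (x : nat -> R) (t : R) (k : nat) : R :=
  Gamma (INR (k + 1) / 2 * INR (d - 1) + / 2) / Gamma (INR k / 2 * INR (d - 1)) *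
  (Rpower (c ^ 2 * t ^ 2 - norm_d d x ^ 2) (INR k / 2 * INR (d - 1) - 1) /
   (Rpower PI (INR d / 2) * (c * t) ^ ((k + 1) * (d - 1) - 1))).

(** density of the absolutely continuous component of the law of X_d(t):
    sum_{k>=1} p(x,t;k) P{N_d(t) = k} *)
Definition pX (d : nat) (c lam : R) (x : nat -> R) (t : R) : R :=
  Series (fun k => p_cond d c x t (S k) * probN d lam t (S k)).

Definition f_fun (d : nat) (c lam : R) (x : nat -> R) (t : R) : R :=
  Rpower PI (INR d / 2) * (c * t) ^ (d - 2) *
  ML4 d ((lam * t / 2) ^ (d - 1)) * pX d c lam x t.

Definition upd (x : nat -> R) (j : nat) (s : R) : nat -> R :=
  fun i => if Nat.eqb i j then s else x i.

(** partial derivative: [None] = d/dt, [Some j] = d/dx_j *)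
Definition partial (o : option nat) (u : (nat -> R) -> R -> R) : (nat -> R) -> R -> R :=
  fun x t => match o with
             | None => Derive (fun s => u x s) t
             | Some j => Derive (fun s => u (upd x j s) t) (x j)
             end.

Definition ex_partial (o : option nat) (u : (nat -> R) -> R -> R) (x : nat -> R) (t : R) : Prop :=
  match o with
  | None => ex_derive (fun s => u x s) t
  | Some j => ex_derive (fun s => u (upd x j s) t) (x j)
  end.

Definition valid_dir (d : nat) (o : option nat) : Prop :=
  match o with None => True | Some j => (j < d)%nat end.

Definition iter_partial (l : list (option nat)) (u : (nat -> R) -> R -> R) :=
  fold_right partial u l.

Definition smooth_on (d : nat) (U : (nat -> R) -> R -> Prop) (u : (nat -> R) -> R -> R) : Prop :=
  forall (l : list (option nat)) (o : option nat),
    List.Forall (valid_dir d) (o :: l) ->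
    forall x t, U x t -> ex_partial o (iter_partial l u) x t.

Definition wave_op (d : nat) (c : R) (u : (nat -> R) -> R -> R) : (nat -> R) -> R -> R :=
  fun x t => partial None (partial None u) x t
             - c ^ 2 * sum_lt d (fun j => partial (Some j) (partial (Some j) u) x t).

Fixpoint wave_op_iter (n d : nat) (c : R) (u : (nat -> R) -> R -> R) : (nat -> R) -> R -> R :=
  match n with O => u | S m => wave_op d c (wave_op_iter m d c u) end.

Definition cone (d : nat) (c : R) (x : nat -> R) (t : R) : Prop :=
  0 < t /\ norm_d d x < c * t.

(* Main.v *)
Require Import Defs.
From Stdlib Require Import Reals List.
From Stdlib Require Import Lra Psatz FunctionalExtensionality Arith.
From Coquelicot Require Import Coquelicot.
Open Scope R_scope.

Lemma isd_eq (f : R -> R) x l1 l2 : is_derive f x l1 -> l1 = l2 -> is_derive f x l2.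
Proof. intros H ->; exact H. Qed.

Lemma isd_mult (f g : R -> R) x df dg : is_derive f x df -> is_derive g x dg ->
  is_derive (fun z => f z * g z) x (df * g x + f x * dg).
Proof. intros. exact (is_derive_mult f g x df dg H H0 Rmult_comm). Qed.

Lemma isd_plus (f g : R -> R) x df dg : is_derive f x df -> is_derive g x dg ->
  is_derive (fun z => f z + g z) x (df + dg).
Proof. intros. exact (is_derive_plus f g x df dg H H0). Qed.

Lemma isd_minus (f g : R -> R) x df dg : is_derive f x df -> is_derive g x dg ->
  is_derive (fun z => f z - g z) x (df - dg).
Proof. intros. exact (is_derive_minus f g x df dg H H0). Qed.

Lemma isd_scal (f : R -> R) k x df : is_derive f x df ->
  is_derive (fun z => k * f z) x (k * df).
Proof. intros. exact (is_derive_scal f x k df H). Qed.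

Lemma isd_const (k x : R) : is_derive (fun _ => k) x 0.
Proof. exact (is_derive_const k x). Qed.

Lemma isd_id (x : R) : is_derive (fun z => z) x 1.
Proof. exact (is_derive_id x). Qed.

Lemma isd_comp (f g : R -> R) x df dg : is_derive f (g x) df -> is_derive g x dg ->
  is_derive (fun z => f (g z)) x (dg * df).
Proof. intros. exact (is_derive_comp f g x df dg H H0). Qed.

Lemma isd_Rpower y x : 0 < x -> is_derive (fun z => Rpower z y) x (y * Rpower x (y-1)).
Proof. intros. apply is_derive_Reals, derivable_pt_lim_power; auto. Qed.

Lemma isd_exp x : is_derive exp x (exp x).
Proof. apply is_derive_Reals, derivable_pt_lim_exp. Qed.

Lemma isd_cont (f : R -> R) x l : is_derive f x l -> continuous f x.
Proof. intros. apply (ex_derive_continuous f). exists l; auto. Qed.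

Ltac req := match goal with |- ?a = ?b => change (@eq R a b) end; try change RinvImpl.Rinv with Rinv.


Definition gi (s x : R) := Rpower x (s - 1) * exp (- x).

Lemma Rpower_is_derive y x : 0 < x -> is_derive (fun z => Rpower z y) x (y * Rpower x (y-1)).
Proof. intros. apply is_derive_Reals, derivable_pt_lim_power; auto. Qed.

Lemma is_derive_eq (f : R -> R) x l1 l2 : is_derive f x l1 -> l1 = l2 -> is_derive f x l2.
Proof. intros H ->; exact H. Qed.

Lemma Rpower_pos x y : 0 < Rpower x y.
Proof. unfold Rpower; apply exp_pos. Qed.

Lemma gi_derive s x : 0 < x ->
  is_derive (gi s) x ((s-1) * Rpower x (s-1-1) * exp (-x) - Rpower x (s-1) * exp (-x)).
Proof.
  intros Hx. unfold gi.
  eapply is_derive_eq.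
  { apply (is_derive_mult (fun z => Rpower z (s-1)) (fun z => exp (-z))).
  apply Rpower_is_derive; auto.
  auto_derive; auto.
  intros; apply Rmult_comm. }
  simpl. unfold scal, mult, opp, one, plus; simpl. unfold mult; simpl. ring.
Qed.

Lemma gi_cont s x : 0 < x -> continuous (gi s) x.
Proof. intros H. apply (ex_derive_continuous (gi s)). eexists. apply gi_derive; auto. Qed.

Lemma gi_pos s x : 0 < gi s x.
Proof. unfold gi. apply Rmult_lt_0_compat. apply Rpower_pos. apply exp_pos. Qed.

Lemma gi_exR s a b : 0 < a -> 0 < b -> ex_RInt (gi s) a b.
Proof.
  intros. apply (ex_RInt_continuous (V:=R_CompleteNormedModule)). intros z Hz. apply gi_cont.
  assert (0 < Rmin a b) by (apply Rmin_glb_lt; auto). lra.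
Qed.


Lemma ln_le_sub1 y : 0 < y -> ln y <= y - 1.
Proof. intros. pose proof (exp_ineq1_le (ln y)). rewrite exp_ln in H0; lra. Qed.

Lemma exp_le_mono a b : a <= b -> exp a <= exp b.
Proof. intros [H|H]. left; apply exp_increasing; auto. rewrite H; lra. Qed.

Definition Kc (s : R) := exp ((Rabs (s-1) + 1) * ln (2 * (Rabs (s-1) + 1))).

Lemma gi_bound_inf s x : 1 <= x -> gi s x <= Kc s * exp (- x / 2).
Proof.
  intros Hx. unfold gi, Kc, Rpower. rewrite <- !exp_plus.
  apply exp_le_mono.
  set (A := Rabs (s-1) + 1).
  assert (HA : 0 < A) by (unfold A; pose proof (Rabs_pos (s-1)); lra).
  assert (Hs : s - 1 <= A) by (unfold A; pose proof (Rle_abs (s-1)); lra).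
  assert (Hl : 0 <= ln x) by (rewrite <- ln_1; apply ln_le; lra).
  assert (Hx2 : x = (2*A) * (x / (2*A))) by (field; lra).
  assert (Hl2 : ln x = ln (2*A) + ln (x/(2*A))).
  { rewrite Hx2 at 1. apply ln_mult; [lra| apply Rdiv_lt_0_compat; lra]. }
  assert (Hl3 : ln (x/(2*A)) <= x/(2*A) - 1) by (apply ln_le_sub1; apply Rdiv_lt_0_compat; lra).
  assert (H1 : (s-1) * ln x <= A * ln x) by (apply Rmult_le_compat_r; auto).
  assert (H2 : A * ln (x / (2*A)) <= x / 2).
  { apply Rle_trans with (A * (x/(2*A) - 1)). apply Rmult_le_compat_l; lra.
    replace (A * (x / (2 * A) - 1)) with (x/2 - A) by (field; lra). lra. }
  rewrite Hl2 in H1 |- *. rewrite !Rmult_plus_distr_l in H1 |- *. lra.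
Qed.

Lemma gi_bound_0 s x : 0 < x -> gi s x <= Rpower x (s-1).
Proof.
  intros. unfold gi. pose proof (Rpower_pos x (s-1)).
  assert (exp (-x) <= 1) by (rewrite <- exp_0; apply exp_le_mono; lra). nra.
Qed.


Lemma Rpower_cont y x : 0 < x -> continuous (fun z => Rpower z y) x.
Proof. intros. apply (ex_derive_continuous (fun z => Rpower z y)). eexists; apply Rpower_is_derive; auto. Qed.

Lemma Rpower_1_l y : Rpower 1 y = 1.
Proof. unfold Rpower. rewrite ln_1, Rmult_0_r. apply exp_0. Qed.

Lemma Kc_pos s : 0 < Kc s.
Proof. apply exp_pos. Qed.

Lemma RInt_Rpower s a : 0 < s -> 0 < a <= 1 -> RInt (fun x => Rpower x (s-1)) a 1 = (1 - Rpower a s) / s.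
Proof.
  intros Hs Ha.
  assert (H : is_RInt (fun x => Rpower x (s-1)) a 1
     (minus ((fun x => Rpower x s / s) 1) ((fun x => Rpower x s / s) a))).
  { apply (is_RInt_derive (V:=R_CompleteNormedModule) (fun x => Rpower x s / s)).
  - intros x Hx. rewrite Rmin_left in Hx by lra. rewrite Rmax_right in Hx by lra.
    eapply isd_eq. apply (isd_mult (fun z => Rpower z s) (fun _ => / s)).
    apply isd_Rpower. lra. apply isd_const.
    match goal with |- ?a = ?b => change (@eq R a b) end. field. lra.
  - intros x Hx. rewrite Rmin_left in Hx by lra. rewrite Rmax_right in Hx by lra.
    apply Rpower_cont. lra. }
  rewrite (is_RInt_unique _ _ _ _ H).
  unfold minus, plus, opp; simpl. rewrite Rpower_1_l. field. lra.
Qed.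

Lemma RInt_expo K b : 1 <= b -> RInt (fun x => K * exp (- x / 2)) 1 b = 2 * K * (exp (-1/2) - exp (-b/2)).
Proof.
  intros Hb.
  assert (H : is_RInt (fun x => K * exp (- x / 2)) 1 b
    (minus ((fun x => -2 * K * exp (-x/2)) b) ((fun x => -2 * K * exp (-x/2)) 1))).
  { apply (is_RInt_derive (V:=R_CompleteNormedModule) (fun x => -2 * K * exp (-x/2))).
  - intros x Hx. auto_derive; auto. req. unfold Rdiv; field.
  - intros x Hx. apply (ex_derive_continuous (fun x => K * exp (- x / 2))).
    auto_derive; auto. }
  rewrite (is_RInt_unique _ _ _ _ H).
  unfold minus, plus, opp; simpl. field_simplify. ring_simplify. 
  replace (- (1) / 2) with (-1/2) by field. ring.
Qed.

Lemma J_le s a b : 0 < s -> 0 < a <= 1 -> 1 <= b -> RInt (gi s) a b <= / s + 2 * Kc s.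
Proof.
  intros Hs Ha Hb.
  rewrite <- (RInt_Chasles (V:=R_CompleteNormedModule) (gi s) a 1 b) by (apply gi_exR; lra).
  simpl. unfold plus; simpl.
  assert (H1 : RInt (gi s) a 1 <= / s).
  { apply Rle_trans with (RInt (fun x => Rpower x (s-1)) a 1).
    apply RInt_le. lra. apply gi_exR; lra.
    apply (ex_RInt_continuous (V:=R_CompleteNormedModule)). intros z Hz.
    rewrite Rmin_left in Hz by lra. apply Rpower_cont. lra.
    intros x Hx. apply gi_bound_0. lra.
    rewrite RInt_Rpower by lra. pose proof (Rpower_pos a s).
    unfold Rdiv. rewrite Rmult_minus_distr_r, Rmult_1_l.
    assert (0 < Rpower a s * / s) by (apply Rmult_lt_0_compat; auto; apply Rinv_0_lt_compat; auto). lra. }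
  assert (H2 : RInt (gi s) 1 b <= 2 * Kc s).
  { apply Rle_trans with (RInt (fun x => Kc s * exp (- x / 2)) 1 b).
    apply RInt_le. lra. apply gi_exR; lra.
    apply (ex_RInt_continuous (V:=R_CompleteNormedModule)). intros z Hz.
    apply (ex_derive_continuous (fun x => Kc s * exp (- x / 2))). auto_derive; auto.
    intros x Hx. apply gi_bound_inf. lra.
    rewrite RInt_expo by lra. pose proof (Kc_pos s). pose proof (exp_pos (-b/2)).
    assert (exp (-1/2) <= 1) by (rewrite <- exp_0; apply exp_le_mono; lra). nra. }
  lra.
Qed.


Lemma ballR (x y : R) (e : R) : Rabs (y - x) < e -> ball x e y.
Proof. intros. unfold ball; simpl. unfold AbsRing_ball; simpl. unfold abs, minus, plus, opp; simpl. exact H. Qed.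

Lemma ballR' (x y : R) (e : R) : ball x e y -> Rabs (y - x) < e.
Proof. intros. unfold ball in H; simpl in H. unfold AbsRing_ball in H; simpl in H. unfold abs, minus, plus, opp in H; simpl in H. exact H. Qed.

Lemma J_mono s a b a' b' : 0 < a' <= a -> a <= b -> b <= b' ->
  RInt (gi s) a b <= RInt (gi s) a' b'.
Proof.
  intros Ha Hab Hb.
  rewrite <- (RInt_Chasles (V:=R_CompleteNormedModule) (gi s) a' a b') by (apply gi_exR; lra).
  rewrite <- (RInt_Chasles (V:=R_CompleteNormedModule) (gi s) a b b') by (apply gi_exR; lra).
  simpl. unfold plus; simpl.
  assert (0 <= RInt (gi s) a' a) by (apply RInt_ge_0; [lra|apply gi_exR; lra|intros; left; apply gi_pos]).
  assert (0 <= RInt (gi s) b b') by (apply RInt_ge_0; [lra|apply gi_exR; lra|intros; left; apply gi_pos]).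
  lra.
Qed.

Lemma Gamma_exists s : 0 < s -> exists L,
  is_RInt_gen (gi s) (at_right 0) (Rbar_locally p_infty) L /\ 0 < L.
Proof.
  intros Hs.
  set (E := fun y => exists a b, 0 < a <= 1 /\ 1 <= b /\ y = RInt (gi s) a b).
  assert (HB : bound E).
  { exists (/ s + 2 * Kc s). intros y [a [b [Ha [Hb ->]]]]. apply J_le; auto. }
  assert (HE : exists y, E y) by (exists (RInt (gi s) 1 1), 1, 1; repeat split; lra).
  destruct (completeness E HB HE) as [L [HL1 HL2]].
  exists L. split.
  - unfold is_RInt_gen.
    apply (filterlimi_lim_ext_loc (fun ab => RInt (gi s) (fst ab) (snd ab))).
    + apply (Filter_prod _ _ _ (fun a => 0 < a) (fun b => 0 < b)).
      * exists (mkposreal 1 Rlt_0_1). intros; auto.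
      * exists 0. intros; auto.
      * intros a b Ha Hb. simpl. apply (RInt_correct (V:=R_CompleteNormedModule)). apply gi_exR; auto.
    + apply filterlim_locally. intros eps.
      assert (Hex : exists y, E y /\ L - eps < y).
      { apply Classical_Pred_Type.not_all_not_ex. intros Hn.
        assert (is_upper_bound E (L - eps)).
        { intros y Hy. specialize (Hn y). apply Rnot_lt_le. intros Hl. apply Hn; split; auto. }
        specialize (HL2 _ H). destruct eps; simpl in *; lra. }
      destruct Hex as [y [[a0 [b0 [Ha0 [Hb0 ->]]]] Hy]].
      apply (Filter_prod _ _ _ (fun a => 0 < a <= a0) (fun b => b0 <= b)).
      * exists (mkposreal a0 (proj1 Ha0)). intros y Hb Hy0. apply ballR' in Hb. simpl in Hb.
        rewrite Rminus_0_r, Rabs_right in Hb by lra. lra.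
      * exists b0. intros; lra.
      * intros a b Ha Hb. simpl. apply ballR.
        assert (H1 : RInt (gi s) a0 b0 <= RInt (gi s) a b) by (apply J_mono; lra).
        assert (H2 : RInt (gi s) a b <= L) by (apply HL1; exists a, b; repeat split; lra).
        apply Rabs_def1; destruct eps; simpl in *; lra.
  - apply Rlt_le_trans with (RInt (gi s) (1/2) 1).
    apply RInt_gt_0. lra. intros; apply gi_pos. intros; apply gi_cont; lra.
    apply HL1. exists (1/2), 1. repeat split; lra.
Qed.


Lemma Gamma_gi s : Gamma s = RInt_gen (gi s) (at_right 0) (Rbar_locally p_infty).
Proof. reflexivity. Qed.

Lemma Gamma_is s : 0 < s -> is_RInt_gen (gi s) (at_right 0) (Rbar_locally p_infty) (Gamma s) /\ 0 < Gamma s.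
Proof.
  intros Hs. destruct (Gamma_exists s Hs) as [L [HL HL0]].
  assert (Gamma s = L).
  { rewrite Gamma_gi. apply (is_RInt_gen_unique (V:=R_CompleteNormedModule)); auto. }
  rewrite H; auto.
Qed.

Lemma Gamma_pos s : 0 < s -> 0 < Gamma s.
Proof. intros; apply Gamma_is; auto. Qed.

Lemma locally_pos x : 0 < x -> locally x (fun y => 0 < y).
Proof.
  intros Hx. exists (mkposreal x Hx). intros y Hy. apply ballR' in Hy. simpl in Hy.
  apply Rabs_def2 in Hy. lra.
Qed.

Lemma Gamma_succ s : 0 < s -> Gamma (s + 1) = s * Gamma s.
Proof.
  intros Hs.
  set (F := fun x => - (Rpower x s * exp (- x))).
  assert (HF : forall x, 0 < x -> is_derive F x (gi (s+1) x - s * gi s x)).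
  { intros x Hx. unfold F, gi. replace (s + 1 - 1) with s by ring.
    eapply isd_eq. apply (is_derive_opp (fun x => Rpower x s * exp (- x))).
    apply isd_mult. apply isd_Rpower; auto. auto_derive; auto.
    simpl. unfold opp; simpl. req. ring. }
  assert (HD : forall x, 0 < x -> Derive F x = gi (s+1) x - s * gi s x).
  { intros. apply is_derive_unique. auto. }
  assert (Hc : forall x, 0 < x -> continuous (Derive F) x).
  { intros x Hx. apply (continuous_ext_loc _ (fun y => gi (s+1) y - s * gi s y)).
    generalize (locally_pos x Hx). apply filter_imp. intros y Hy. symmetry. apply HD; auto.
    apply (continuous_minus (fun y => gi (s+1) y) (fun y => s * gi s y)).
    apply gi_cont; auto. apply (continuous_scal_r s (gi s)). apply gi_cont; auto. }
  assert (H0 : filterlim F (at_right 0) (locally 0)).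
  { apply filterlim_locally. intros eps.
    exists (mkposreal (Rpower eps (/ s)) (Rpower_pos _ _)). intros y Hy Hy0.
    apply ballR' in Hy. simpl in Hy. rewrite Rminus_0_r, Rabs_right in Hy by lra.
    apply ballR. unfold F. rewrite Rminus_0_r, Rabs_Ropp.
    pose proof (Rpower_pos y s). pose proof (exp_pos (-y)).
    assert (exp (-y) <= 1) by (rewrite <- exp_0; apply exp_le_mono; lra).
    rewrite Rabs_right by nra.
    assert (Rpower y s < eps).
    { replace (pos eps) with (Rpower (Rpower eps (/s)) s).
      apply Rlt_Rpower_l; auto. rewrite Rpower_mult. rewrite Rinv_l by lra.
      unfold Rpower. rewrite Rmult_1_l. apply exp_ln. destruct eps; auto. }
    nra. }
  assert (H1 : filterlim F (Rbar_locally p_infty) (locally 0)).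
  { apply filterlim_locally. intros eps.
    pose proof (Kc_pos (s+1)).
    exists (Rmax 1 (-2 * ln (eps / Kc (s+1)))). intros y Hy.
    assert (Hy1 : 1 < y) by (eapply Rle_lt_trans; [apply Rmax_l|eauto]).
    assert (Hy2 : -2 * ln (eps / Kc (s+1)) < y) by (eapply Rle_lt_trans; [apply Rmax_r|eauto]).
    apply ballR. unfold F. rewrite Rminus_0_r, Rabs_Ropp.
    pose proof (gi_pos (s+1) y) as G2. unfold gi in G2. replace (s + 1 - 1) with s in G2 by ring.
    rewrite Rabs_right by lra.
    pose proof (gi_bound_inf (s+1) y (Rlt_le _ _ Hy1)) as G3. unfold gi in G3.
    replace (s + 1 - 1) with s in G3 by ring.
    assert (exp (- y / 2) < eps / Kc (s+1)).
    { rewrite <- (exp_ln (eps / Kc (s+1))).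
      apply exp_increasing. lra. apply Rdiv_lt_0_compat; auto. destruct eps; auto. }
    apply Rle_lt_trans with (Kc (s+1) * exp (- y / 2)); auto.
    apply Rlt_le_trans with (Kc (s+1) * (eps / Kc (s+1))).
    apply Rmult_lt_compat_l; auto. right; field; lra. }
  assert (HI := is_RInt_gen_Derive (Fa := at_right 0) (Fb := Rbar_locally p_infty) F 0 0).
  assert (HP : filter_prod (at_right 0) (Rbar_locally p_infty) (fun ab => 0 < fst ab /\ 0 < snd ab)).
  { apply (Filter_prod _ _ _ (fun a => 0 < a) (fun b => 0 < b)).
    exists (mkposreal 1 Rlt_0_1). intros; auto. exists 0. intros; auto.
    intros; simpl; auto. }
  assert (HI2 : is_RInt_gen (Derive F) (at_right 0) (Rbar_locally p_infty) (0 - 0)).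
  { apply HI; auto.
    - generalize HP. apply filter_imp. intros [a b] [Ha Hb] x Hx. simpl in *.
      eexists; apply HF. assert (0 < Rmin a b) by (apply Rmin_glb_lt; auto). lra.
    - generalize HP. apply filter_imp. intros [a b] [Ha Hb] x Hx. simpl in *.
      apply Hc. assert (0 < Rmin a b) by (apply Rmin_glb_lt; auto). lra. }
  destruct (Gamma_is s Hs) as [HG _].
  assert (HS := is_RInt_gen_scal (gi s) s _ HG).
  assert (HT := is_RInt_gen_plus _ _ _ _ HI2 HS).
  assert (HT2 : is_RInt_gen (gi (s+1)) (at_right 0) (Rbar_locally p_infty) (s * Gamma s)).
  { replace (s * Gamma s) with (plus (0 - 0) (scal s (Gamma s))).
    2:{ unfold plus, scal; simpl. unfold mult; simpl. req. ring. }
    eapply is_RInt_gen_ext; [| exact HT].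
    generalize HP. apply filter_imp. intros [a b] [Ha Hb] x Hx. simpl in *.
    assert (0 < x) by (assert (0 < Rmin a b) by (apply Rmin_glb_lt; auto); lra).
    rewrite HD by auto. unfold plus, scal; simpl. unfold mult; simpl. req. ring. }
  rewrite Gamma_gi. apply (is_RInt_gen_unique (V:=R_CompleteNormedModule)); auto.
Qed.


Fixpoint desc (w : R) (n : nat) : R :=
  match n with O => 1 | S n' => desc w n' * (w - 1 - INR n') end.

Lemma Gamma_desc n w : 0 < w - INR n -> Gamma w = Gamma (w - INR n) * desc w n.
Proof.
  induction n; intros H.
  - simpl. rewrite Rminus_0_r. ring.
  - rewrite S_INR in H. rewrite IHn by lra. cbn [desc].
    replace (w - INR n) with ((w - INR (S n)) + 1) by (rewrite S_INR; ring).
    rewrite Gamma_succ by (rewrite S_INR; lra). rewrite S_INR. ring.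
Qed.

Lemma desc_ge n w : 1 <= w - INR n -> 1 <= desc w n /\ ((1 <= n)%nat -> w - INR n <= desc w n).
Proof.
  induction n; intros H.
  - simpl. split. lra. intros; lia.
  - rewrite S_INR in H. assert (Hn : 1 <= w - INR n) by lra.
    destruct (IHn Hn) as [H1 H2]. cbn [desc].
    rewrite ?S_INR. split. nra. intros _. nra.
Qed.

Lemma desc_pos n w : 0 < w - INR n -> 0 < desc w n.
Proof.
  induction n; intros H. simpl; lra.
  rewrite S_INR in H. cbn [desc]. apply Rmult_lt_0_compat. apply IHn; lra. lra.
Qed.

Lemma desc_zero n : (1 <= n)%nat -> desc (INR n) n = 0.
Proof.
  intros H. destruct n. lia. cbn [desc]. rewrite S_INR. ring.
Qed.

(* Legendre duplication at half-integers *)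
Lemma dup_aux N : (1 <= N)%nat ->
  Gamma (INR N / 2) * Gamma (INR N / 2 + / 2) * 2 ^ (N - 1) = Gamma (/ 2) * Gamma (INR N).
Proof.
  assert (G1 : Gamma (/2 + 1) = /2 * Gamma (/2)) by (apply Gamma_succ; lra).
  assert (G2 : Gamma (1 + 1) = 1 * Gamma 1) by (apply Gamma_succ; lra).
  assert (forall N, (1 <= N)%nat ->
    Gamma (INR N / 2) * Gamma (INR N / 2 + / 2) * 2 ^ (N - 1) = Gamma (/ 2) * Gamma (INR N) /\
    Gamma (INR (S N) / 2) * Gamma (INR (S N) / 2 + / 2) * 2 ^ (S N - 1) = Gamma (/ 2) * Gamma (INR (S N))).
  { intros N0 HN. induction HN.
    - split.
      + simpl. replace (1/2) with (/2) by field. replace (/2 + /2) with 1 by field. ring.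
      + simpl. replace ((1+1)/2) with 1 by field. replace (1 + /2) with (/2 + 1) by ring.
        rewrite G1, G2. generalize (Gamma (/2)) (Gamma 1); intros; field.
    - destruct IHHN as [IH1 IH2]. split; [exact IH2|].
      assert (HM : 0 < INR m) by (apply lt_0_INR; lia).
      assert (E1 : INR (S (S m)) / 2 = (INR m / 2) + 1) by (rewrite !S_INR; field).
      assert (E2 : INR (S (S m)) = (INR m + 1) + 1) by (rewrite !S_INR; ring).
      rewrite E1, E2. remember (INR m) as z.
      assert (E3 : Gamma (z/2 + 1) = z/2 * Gamma (z/2)) by (apply Gamma_succ; lra).
      assert (E4 : Gamma ((z/2 + /2) + 1) = (z/2 + /2) * Gamma (z/2 + /2)) by (apply Gamma_succ; lra).
      assert (E5 : Gamma ((z + 1) + 1) = (z + 1) * Gamma (z + 1)) by (apply Gamma_succ; lra).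
      assert (E6 : Gamma (z + 1) = z * Gamma z) by (apply Gamma_succ; lra).
      assert (E7 : 2 ^ (S (S m) - 1) = 4 * 2 ^ (m - 1)).
      { replace (S (S m) - 1)%nat with (S (S (m - 1))) by lia. simpl. ring. }
      rewrite E7. replace (z / 2 + 1 + / 2) with ((z/2 + /2) + 1) by ring.
      rewrite E3, E4, E5, E6.
      transitivity (z * (z + 1) * (Gamma (z / 2) * Gamma (z / 2 + / 2) * 2 ^ (m - 1))).
      field. rewrite IH1. ring. }
  intros HN. exact (proj1 (H N HN)).
Qed.


Definition good (b : nat -> R) := CV_radius b = p_infty.

Lemma good_ext a b : (forall n, a n = b n) -> good a -> good b.
Proof. unfold good; intros H Ha. rewrite <- Ha. symmetry. apply CV_radius_ext; auto. Qed.

Lemma Rbar_le_inf x : Rbar_le p_infty x -> x = p_infty.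
Proof. destruct x; simpl; tauto. Qed.

Lemma good_plus a b : good a -> good b -> good (fun n => a n + b n).
Proof.
  unfold good; intros Ha Hb. apply Rbar_le_inf.
  pose proof (CV_radius_plus a b). rewrite Ha, Hb in H. simpl in H.
  rewrite (CV_radius_ext _ (PS_plus a b)); auto.
Qed.

Lemma good_scal c a : good a -> good (fun n => c * a n).
Proof.
  unfold good; intros Ha. destruct (Req_dec c 0) as [->|Hc].
  - rewrite (CV_radius_ext _ (fun _ => 0)). apply CV_radius_const_0. intros; ring.
  - rewrite (CV_radius_ext _ (PS_scal c a)). rewrite CV_radius_scal; auto. intros; reflexivity.
Qed.

Lemma good_k a : good a -> good (fun n => INR n * a n).
Proof.
  unfold good; intros Ha.
  rewrite (CV_radius_ext _ (PS_incr_1 (PS_derive a))).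
  rewrite CV_radius_incr_1, CV_radius_derive; auto.
  intros [|n]; simpl; unfold PS_derive, zero; simpl; try ring.
Qed.

Lemma good_ex a x : good a -> ex_pseries a x.
Proof. intros Ha. apply CV_radius_inside. rewrite Ha. simpl; auto. Qed.

Definition Dc (m e : R) (b : nat -> R) (k : nat) := (e + m * INR k) * b k.

Lemma good_Dc m e b : good b -> good (Dc m e b).
Proof.
  intros Hb. apply (good_ext (fun n => e * b n + m * (INR n * b n))).
  intros; unfold Dc; ring.
  apply good_plus. apply good_scal; auto. apply good_scal, good_k; auto.
Qed.

Definition Phi (m : R) (b : nat -> R) (e s : R) := Rpower s e * PSeries b (Rpower s m).

Lemma PSeries_plus' a b x : good a -> good b ->
  PSeries (fun n => a n + b n) x = PSeries a x + PSeries b x.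
Proof.
  intros. rewrite <- PSeries_plus by (apply good_ex; auto). apply PSeries_ext. reflexivity.
Qed.

Lemma PSeries_scal' c a x : PSeries (fun n => c * a n) x = c * PSeries a x.
Proof. rewrite <- PSeries_scal. apply PSeries_ext. reflexivity. Qed.

Lemma Phi_plus m a b e s : good a -> good b ->
  Phi m (fun n => a n + b n) e s = Phi m a e s + Phi m b e s.
Proof. intros. unfold Phi. rewrite PSeries_plus' by auto. ring. Qed.

Lemma Phi_scal m c a e s : Phi m (fun n => c * a n) e s = c * Phi m a e s.
Proof. unfold Phi. rewrite PSeries_scal'. ring. Qed.

Lemma Phi_s m a e s : 0 < s -> s * Phi m a (e - 1) s = Phi m a e s.
Proof.
  intros Hs. unfold Phi. replace e with (1 + (e - 1)) at 2 by ring.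
  rewrite Rpower_plus, Rpower_1 by auto. ring.
Qed.

Lemma Phi_derive m b e s : 0 < s -> good b ->
  is_derive (Phi m b e) s (Phi m (Dc m e b) (e-1) s).
Proof.
  intros Hs Hb. unfold Phi.
  set (w := Rpower s m).
  eapply isd_eq.
  { apply (isd_mult (fun z => Rpower z e) (fun z => PSeries b (Rpower z m))).
    apply isd_Rpower; auto.
    apply (isd_comp (PSeries b) (fun z => Rpower z m)).
    apply is_derive_PSeries. rewrite Hb; simpl; auto.
    apply isd_Rpower; auto. }
  fold w.
  assert (HD : PSeries (Dc m e b) w = e * PSeries b w + m * (w * PSeries (PS_derive b) w)).
  { rewrite <- PSeries_incr_1.
    rewrite <- (PSeries_scal' m), <- (PSeries_scal' e).
    rewrite <- PSeries_plus'. apply PSeries_ext. intros [|n]; unfold Dc, PS_derive; simpl; unfold zero; simpl; req; ring.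
    apply good_scal; auto.
    apply good_scal. unfold good. rewrite CV_radius_incr_1, CV_radius_derive; auto. }
  rewrite HD.
  assert (HR : Rpower s e * Rpower s (m - 1) = Rpower s (e - 1) * w).
  { unfold w. rewrite <- !Rpower_plus. f_equal. ring. }
  transitivity (e * Rpower s (e-1) * PSeries b w + m * (Rpower s e * Rpower s (m - 1)) * PSeries (PS_derive b) w).
  simpl. unfold scal; simpl; unfold mult; simpl. req. ring. req. rewrite HR. ring.
Qed.

Lemma Phi_cont m b e s : 0 < s -> good b -> continuous (Phi m b e) s.
Proof. intros. eapply isd_cont. apply Phi_derive; auto. Qed.


Lemma sum_lt_ext n f g : (forall j, (j < n)%nat -> f j = g j) -> sum_lt n f = sum_lt n g.
Proof.
  induction n; intros H; simpl. reflexivity.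
  rewrite IHn. rewrite H by lia. reflexivity. intros j Hj; apply H; lia.
Qed.

Lemma sum_lt_nonneg n f : (forall j, 0 <= f j) -> 0 <= sum_lt n f.
Proof. induction n; intros H; simpl. lra. pose proof (H n). specialize (IHn H). lra. Qed.

Lemma sum_lt_lin n f a b : sum_lt n (fun j => a * f j + b) = a * sum_lt n f + INR n * b.
Proof. induction n; cbn [sum_lt]. simpl; ring. rewrite IHn, S_INR. ring. Qed.

Lemma upd_same (x : nat -> R) i : upd x i (x i) = x.
Proof. apply functional_extensionality. intros j. unfold upd. destruct (Nat.eqb_spec j i); subst; auto. Qed.

Lemma upd_eq (x : nat -> R) i s : upd x i s i = s.
Proof. unfold upd. rewrite Nat.eqb_refl. auto. Qed.

Definition Sf (d : nat) (c : R) (x : nat -> R) (t : R) := c^2 * t^2 - sum_lt d (fun j => x j ^ 2).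

Lemma sum_upd d x i s : (i < d)%nat ->
  sum_lt d (fun j => upd x i s j ^ 2) = sum_lt d (fun j => x j ^ 2) - x i ^ 2 + s ^ 2.
Proof.
  induction d; intros H. lia.
  cbn [sum_lt]. destruct (Nat.eq_dec i d).
  - subst i. rewrite (sum_lt_ext d (fun j => upd x d s j ^ 2) (fun j => x j ^ 2)).
    rewrite upd_eq. ring.
    intros j Hj. unfold upd. destruct (Nat.eqb_spec j d). lia. auto.
  - rewrite IHd by lia. unfold upd at 1. destruct (Nat.eqb_spec d i). lia. ring.
Qed.

Lemma Sf_upd d c x t i s : (i < d)%nat -> Sf d c (upd x i s) t = Sf d c x t + x i ^ 2 - s ^ 2.
Proof. intros. unfold Sf. rewrite sum_upd by auto. ring. Qed.

Definition U (d : nat) (c : R) (x : nat -> R) (t : R) := 0 < t /\ 0 < Sf d c x t.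

Lemma cont_pos (g : R -> R) a : continuous g a -> 0 < g a -> locally a (fun s => 0 < g s).
Proof. intros Hc Hg. apply Hc. apply locally_pos; auto. Qed.

Lemma U_loc_t d c x t : U d c x t -> locally t (fun s => U d c x s).
Proof.
  intros [Ht HS]. apply filter_and. apply locally_pos; auto.
  apply (cont_pos (fun s => Sf d c x s)); auto.
  eapply isd_cont. unfold Sf. auto_derive. auto. reflexivity.
Qed.

Lemma U_loc_x d c x t i : U d c x t -> locally (x i) (fun s => U d c (upd x i s) t).
Proof.
  intros [Ht HS]. destruct (Nat.lt_ge_cases i d) as [Hi|Hi].
  - apply (filter_imp (fun s => 0 < Sf d c x t + x i ^ 2 - s ^ 2)).
    intros s Hs. split; auto. rewrite Sf_upd; auto.
    apply (cont_pos (fun s => Sf d c x t + x i ^ 2 - s ^ 2)). 2: lra.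
    eapply isd_cont. auto_derive. auto. reflexivity.
  - apply filter_forall. intros s. split; auto. unfold Sf.
    rewrite (sum_lt_ext d _ (fun j => x j ^ 2)). exact HS.
    intros j Hj. unfold upd. destruct (Nat.eqb_spec j i). lia. auto.
Qed.

Lemma U_upd_same d c x t i : U d c x t -> U d c (upd x i (x i)) t.
Proof. rewrite upd_same; auto. Qed.

Lemma partial_loc d c o u v x t : (forall x t, U d c x t -> u x t = v x t) -> U d c x t ->
  partial o u x t = partial o v x t.
Proof.
  intros H HU. destruct o as [j|]; simpl.
  - apply Derive_ext_loc. generalize (U_loc_x d c x t j HU). apply filter_imp. intros s Hs; auto.
  - apply Derive_ext_loc. generalize (U_loc_t d c x t HU). apply filter_imp. intros s Hs; auto.
Qed.

Lemma ex_partial_loc d c o u v x t : (forall x t, U d c x t -> u x t = v x t) -> U d c x t ->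
  ex_partial o u x t -> ex_partial o v x t.
Proof.
  intros H HU. destruct o as [j|]; simpl; apply ex_derive_ext_loc.
  - generalize (U_loc_x d c x t j HU). apply filter_imp. intros s Hs; auto.
  - generalize (U_loc_t d c x t HU). apply filter_imp. intros s Hs; auto.
Qed.


Lemma dphi_t d c m b e x t : good b -> U d c x t ->
  is_derive (fun s => Phi m b e (Sf d c x s)) t (Phi m (Dc m e b) (e-1) (Sf d c x t) * (2 * c^2 * t)).
Proof.
  intros Hb [Ht HS]. eapply isd_eq.
  apply (isd_comp (Phi m b e) (fun s => Sf d c x s)). apply Phi_derive; auto.
  unfold Sf. auto_derive. auto. reflexivity. req. ring.
Qed.

Lemma dphi_x d c m b e x t j : (j < d)%nat -> good b -> U d c x t ->
  is_derive (fun s => Phi m b e (Sf d c (upd x j s) t)) (x j)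
    (Phi m (Dc m e b) (e-1) (Sf d c x t) * (-2 * x j)).
Proof.
  intros Hj Hb [Ht HS].
  apply (is_derive_ext (fun s => Phi m b e (Sf d c x t + x j ^ 2 - s ^ 2))).
  intros s. rewrite Sf_upd; auto.
  eapply isd_eq.
  apply (isd_comp (Phi m b e) (fun s => Sf d c x t + x j ^ 2 - s ^ 2)).
  replace (Sf d c x t + x j ^ 2 - x j ^ 2) with (Sf d c x t) by ring.
  apply Phi_derive; auto.
  auto_derive. auto. reflexivity. replace (Sf d c x t + x j ^ 2 - x j ^ 2) with (Sf d c x t) by ring.
  req. ring.
Qed.

Inductive Sm (d : nat) (c m : R) : ((nat -> R) -> R -> R) -> Prop :=
| Sm_phi : forall b e, good b -> Sm d c m (fun x t => Phi m b e (Sf d c x t))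
| Sm_t : Sm d c m (fun x t => t)
| Sm_x : forall i, Sm d c m (fun x t => x i)
| Sm_c : forall k, Sm d c m (fun x t => k)
| Sm_plus : forall u v, Sm d c m u -> Sm d c m v -> Sm d c m (fun x t => u x t + v x t)
| Sm_mult : forall u v, Sm d c m u -> Sm d c m v -> Sm d c m (fun x t => u x t * v x t)
| Sm_ext : forall u v, Sm d c m u -> (forall x t, U d c x t -> u x t = v x t) -> Sm d c m v.

Lemma Sm_partial d c m u : Sm d c m u -> forall o, valid_dir d o ->
  (forall x t, U d c x t -> ex_partial o u x t) /\ Sm d c m (partial o u).
Proof.
  induction 1; intros o Ho.
  -
    destruct o as [j|]; simpl in Ho.
    + split.
      * intros x t HU. eexists. apply dphi_x; auto.
      * apply (Sm_ext _ _ _ (fun x t => Phi m (Dc m e b) (e-1) (Sf d c x t) * (-2 * x j))).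
        apply Sm_mult. apply Sm_phi, good_Dc; auto. apply Sm_mult. apply Sm_c. apply Sm_x.
        intros x t HU. unfold partial. symmetry. apply is_derive_unique. apply dphi_x; auto.
    + split.
      * intros x t HU. eexists. apply dphi_t; auto.
      * apply (Sm_ext _ _ _ (fun x t => Phi m (Dc m e b) (e-1) (Sf d c x t) * (2 * c^2 * t))).
        apply Sm_mult. apply Sm_phi, good_Dc; auto. apply Sm_mult. apply Sm_c. apply Sm_t.
        intros x t HU. unfold partial. symmetry. apply is_derive_unique. apply dphi_t; auto.
  -
    destruct o as [j|]; split.
    + intros x t HU. simpl. apply ex_derive_const.
    + apply (Sm_ext _ _ _ (fun _ _ => 0)). apply Sm_c. intros x t _. unfold partial.
      symmetry. apply Derive_const.
    + intros x t HU. simpl. apply ex_derive_id.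
    + apply (Sm_ext _ _ _ (fun _ _ => 1)). apply Sm_c. intros x t _. unfold partial.
      symmetry. apply Derive_id.
  -
    destruct o as [j|]; split.
    + intros x t HU. simpl. unfold upd. destruct (Nat.eqb_spec i j).
      apply ex_derive_id. apply ex_derive_const.
    + apply (Sm_ext _ _ _ (fun _ _ => if Nat.eqb i j then 1 else 0)). apply Sm_c.
      intros x t _. unfold partial, upd. destruct (Nat.eqb_spec i j).
      symmetry. apply Derive_id. symmetry. apply Derive_const.
    + intros x t HU. simpl. apply ex_derive_const.
    + apply (Sm_ext _ _ _ (fun _ _ => 0)). apply Sm_c. intros x t _. unfold partial.
      symmetry. apply Derive_const.
  -
    destruct o as [j|]; split.
    + intros x t HU. simpl. apply ex_derive_const.
    + apply (Sm_ext _ _ _ (fun _ _ => 0)). apply Sm_c. intros x t _. unfold partial.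
      symmetry. apply Derive_const.
    + intros x t HU. simpl. apply ex_derive_const.
    + apply (Sm_ext _ _ _ (fun _ _ => 0)). apply Sm_c. intros x t _. unfold partial.
      symmetry. apply Derive_const.
  -
    destruct (IHSm1 o Ho) as [Eu Su]. destruct (IHSm2 o Ho) as [Ev Sv]. split.
    + intros x t HU. specialize (Eu x t HU). specialize (Ev x t HU).
      destruct o; simpl in *; apply (ex_derive_plus _ _ _ Eu Ev).
    + apply (Sm_ext _ _ _ (fun x t => partial o u x t + partial o v x t)).
      apply Sm_plus; auto.
      intros x t HU. specialize (Eu x t HU). specialize (Ev x t HU).
      destruct o; simpl in *; symmetry; apply (Derive_plus _ _ _ Eu Ev).
  -
    destruct (IHSm1 o Ho) as [Eu Su]. destruct (IHSm2 o Ho) as [Ev Sv]. split.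
    + intros x t HU. specialize (Eu x t HU). specialize (Ev x t HU).
      destruct o; simpl in *; apply (ex_derive_mult _ _ _ Eu Ev).
    + apply (Sm_ext _ _ _ (fun x t => partial o u x t * v x t + u x t * partial o v x t)).
      apply Sm_plus; apply Sm_mult; auto.
      intros x t HU. specialize (Eu x t HU). specialize (Ev x t HU).
      destruct o; simpl in *; symmetry; rewrite (Derive_mult _ _ _ Eu Ev); auto.
      rewrite upd_same. reflexivity.
  -
    destruct (IHSm o Ho) as [Eu Su]. split.
    + intros x t HU. apply (ex_partial_loc d c o u v x t H0 HU). auto.
    + apply (Sm_ext _ _ _ (partial o u)); auto.
      intros x t HU. apply (partial_loc d c); auto.
Qed.


Lemma wave_loc d c u v x t : (forall x t, U d c x t -> u x t = v x t) -> U d c x t ->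
  wave_op d c u x t = wave_op d c v x t.
Proof.
  intros H HU. unfold wave_op.
  assert (H1 : forall o, forall x t, U d c x t -> partial o u x t = partial o v x t).
  { intros o x' t' HU'. apply (partial_loc d c); auto. }
  rewrite (partial_loc d c None (partial None u) (partial None v)); auto.
  f_equal. f_equal. apply sum_lt_ext. intros j Hj.
  apply (partial_loc d c); auto.
Qed.

Definition Lc (d : nat) (c m e : R) (b : nat -> R) (k : nat) :=
  (4 * c^2) * Dc m (e-1) (Dc m e b) k + (2 * c^2 * (INR d + 1)) * Dc m e b k.

Lemma good_Lc d c m e b : good b -> good (Lc d c m e b).
Proof.
  intros. unfold Lc. apply good_plus; apply good_scal; repeat apply good_Dc; auto.
Qed.

Lemma wave_phi d c m b e x t : good b -> U d c x t ->
  wave_op d c (fun x t => Phi m b e (Sf d c x t)) x t = Phi m (Lc d c m e b) (e-1) (Sf d c x t).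
Proof.
  intros Hb HU. set (b1 := Dc m e b). set (b2 := Dc m (e-1) b1).
  assert (Hb1 : good b1) by (apply good_Dc; auto).
  assert (Hb2 : good b2) by (apply good_Dc; auto).
  set (u := fun x t => Phi m b e (Sf d c x t)).
  assert (Pt : forall x t, U d c x t -> partial None u x t = Phi m b1 (e-1) (Sf d c x t) * (2 * c^2 * t)).
  { intros x' t' HU'. unfold partial, u. apply is_derive_unique. apply dphi_t; auto. }
  assert (Ptt : partial None (partial None u) x t =
     Phi m b2 (e-1-1) (Sf d c x t) * (2 * c^2 * t) * (2 * c^2 * t) + Phi m b1 (e-1) (Sf d c x t) * (2 * c^2)).
  { rewrite (partial_loc d c None _ _ x t Pt HU). unfold partial.
    apply is_derive_unique. eapply isd_eq.
    apply (isd_mult (fun s => Phi m b1 (e-1) (Sf d c x s)) (fun s => 2 * c^2 * s)).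
    apply dphi_t; auto. auto_derive; auto. req. unfold b2. ring. }
  assert (Px : forall j, (j < d)%nat -> forall x t, U d c x t ->
     partial (Some j) u x t = Phi m b1 (e-1) (Sf d c x t) * (-2 * x j)).
  { intros j Hj x' t' HU'. unfold partial, u. apply is_derive_unique. apply dphi_x; auto. }
  assert (Pxx : forall j, (j < d)%nat -> partial (Some j) (partial (Some j) u) x t =
     Phi m b2 (e-1-1) (Sf d c x t) * 4 * (x j ^ 2) + (-2) * Phi m b1 (e-1) (Sf d c x t)).
  { intros j Hj. rewrite (partial_loc d c (Some j) _ _ x t (Px j Hj) HU). unfold partial.
    apply is_derive_unique.
    apply (is_derive_ext (fun s => Phi m b1 (e-1) (Sf d c (upd x j s) t) * (-2 * s))).
    intros s. rewrite upd_eq. reflexivity.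
    eapply isd_eq.
    apply (isd_mult (fun s => Phi m b1 (e-1) (Sf d c (upd x j s) t)) (fun s => -2 * s)).
    apply dphi_x; auto. auto_derive; auto. rewrite upd_same. req. unfold b2. ring. }
  unfold wave_op. fold u. rewrite Ptt.
  rewrite (sum_lt_ext d _ (fun j => (4 * Phi m b2 (e-1-1) (Sf d c x t)) * (x j ^ 2) + (-2) * Phi m b1 (e-1) (Sf d c x t))).
  2:{ intros j Hj. rewrite Pxx by auto. ring. }
  rewrite sum_lt_lin.
  assert (HS : 0 < Sf d c x t) by apply HU.
  unfold Lc. rewrite (Phi_plus m (fun k => 4 * c ^ 2 * Dc m (e - 1) (Dc m e b) k)
     (fun k => 2 * c ^ 2 * (INR d + 1) * Dc m e b k)).
  2,3: apply good_scal; repeat apply good_Dc; auto.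
  rewrite !Phi_scal. fold b1 b2.
  rewrite <- (Phi_s m b2 (e-1) (Sf d c x t)) by auto.
  set (P2 := Phi m b2 (e-1-1) (Sf d c x t)). set (P1 := Phi m b1 (e-1) (Sf d c x t)). unfold Sf. ring.
Qed.


Lemma lim_inv_S : is_lim_seq (fun n => / INR (S n)) 0.
Proof.
  assert (H : is_lim_seq (fun n => INR (S n)) p_infty).
  { apply (is_lim_seq_incr_1 INR p_infty). apply is_lim_seq_INR. }
  apply (is_lim_seq_inv _ _ H). discriminate.
Qed.

Lemma good_dal a C : (forall n, a n <> 0) ->
  eventually (fun n => Rabs (a (S n) / a n) <= C * / INR (S n)) -> good a.
Proof.
  intros Hn Hev. unfold good. apply CV_radius_infinite_DAlembert; auto.
  apply (is_lim_seq_le_le_loc (fun _ => 0) _ (fun n => C * / INR (S n))).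
  - destruct Hev as [N0 HN]. exists N0. intros n Hn0. split. apply Rabs_pos. apply HN; auto.
  - apply is_lim_seq_const.
  - replace (Finite 0) with (Rbar_mult C 0) by (simpl; f_equal; ring).
    apply is_lim_seq_scal_l. apply lim_inv_S.
Qed.

Definition bc (r m : R) (N : nat) (k : nat) : R :=
  match k with O => 0 | S _ => r ^ (k * N) / (Gamma (m * INR k) * Gamma (m * INR k + m)) end.

Lemma good_bc r m N : 0 < r -> (1 <= N)%nat -> m = INR N / 2 -> good (bc r m N).
Proof.
  intros Hr HN Hm.
  assert (Hm0 : / 2 <= m) by (rewrite Hm; apply le_INR in HN; simpl in HN; lra).
  assert (HmN : m + m = INR N) by (rewrite Hm; field).
  apply (good_ext (PS_incr_1 (fun k => bc r m N (S k)))).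
  { intros [|k]; reflexivity. }
  unfold good. rewrite CV_radius_incr_1. fold (good (fun k => bc r m N (S k))).
  apply (good_dal _ (r ^ N / m)).
  - intros k. unfold bc. apply Rmult_integral_contrapositive. split.
    apply pow_nonzero; lra. apply Rinv_neq_0_compat.
    apply Rmult_integral_contrapositive. split; apply Rgt_not_eq, Gamma_pos.
    rewrite S_INR. pose proof (pos_INR k). nra.
    rewrite S_INR. pose proof (pos_INR k). nra.
  - exists 1%nat. intros k Hk.
    assert (Hk1 : 1 <= INR k) by (apply le_INR in Hk; simpl in Hk; lra).
    set (z := m * INR (S k)).
    assert (Hz : 1 <= z) by (unfold z; rewrite S_INR; nra).
    assert (E1 : m * INR (S (S k)) = z + m) by (unfold z; rewrite !S_INR; ring).
    unfold bc. fold z. rewrite E1.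
    assert (Gd : Gamma (z + m + m) = Gamma z * desc (z + m + m) N).
    { rewrite (Gamma_desc N (z + m + m)) by lra. f_equal. f_equal. lra. }
    assert (Gp1 : 0 < Gamma z) by (apply Gamma_pos; lra).
    assert (Gp2 : 0 < Gamma (z + m)) by (apply Gamma_pos; lra).
    assert (Dge : z <= desc (z + m + m) N).
    { destruct (desc_ge N (z + m + m)) as [_ H]. lra. replace z with (z + m + m - INR N) at 1 by lra. apply H; auto. }
    rewrite Gd.
    replace (r ^ (S (S k) * N) / (Gamma (z + m) * (Gamma z * desc (z + m + m) N)) /
      (r ^ (S k * N) / (Gamma z * Gamma (z + m)))) with (r ^ N / desc (z + m + m) N).
    2:{ replace (S (S k) * N)%nat with (N + S k * N)%nat by lia. rewrite pow_add.
        field. repeat split; try lra. apply pow_nonzero; lra. }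
    rewrite Rabs_right.
    2:{ apply Rle_ge. apply Rdiv_le_0_compat. apply pow_le; lra. lra. }
    unfold Rdiv. rewrite Rmult_assoc. apply Rmult_le_compat_l. apply pow_le; lra.
    apply Rle_trans with (/ z). apply Rinv_le_contravar; lra.
    unfold z. rewrite Rinv_mult. right. ring.
Qed.


Fixpoint LL (d : nat) (c m : R) (b : nat -> R) (n : nat) : nat -> R :=
  match n with O => b | S n' => Lc d c m (-1 - INR n') (LL d c m b n') end.

Lemma good_LL d c m b n : good b -> good (LL d c m b n).
Proof. intros Hb. induction n; simpl; auto. apply good_Lc; auto. Qed.

Lemma wave_iter d c m b u : good b ->
  (forall x t, U d c x t -> u x t = Phi m b (-1) (Sf d c x t)) ->
  forall n x t, U d c x t -> wave_op_iter n d c u x t = Phi m (LL d c m b n) (-1 - INR n) (Sf d c x t).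
Proof.
  intros Hb Hu n. induction n; intros x t HU.
  - simpl. rewrite Hu by auto. f_equal. ring.
  - cbn [wave_op_iter].
    rewrite (wave_loc d c _ (fun x t => Phi m (LL d c m b n) (-1 - INR n) (Sf d c x t))); auto.
    rewrite wave_phi; auto. 2: apply good_LL; auto.
    cbn [LL]. f_equal. rewrite S_INR. ring.
Qed.

Lemma LL_closed d c m b n k : INR d + 1 = 2 * m + 2 ->
  LL d c m b n k = (4 * c^2) ^ n * desc (m * INR k) n * desc (m * INR k + m) n * b k.
Proof.
  intros Hd. induction n.
  - simpl. ring.
  - cbn [LL desc]. unfold Lc, Dc. rewrite IHn. simpl pow.
    replace (INR d + 1) with (2 * m + 2) by lra. ring.
Qed.


Lemma LL_bc d c m lam N k : 0 < lam -> 0 < c -> (1 <= N)%nat -> m = INR N / 2 -> INR d + 1 = 2 * m + 2 ->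
  let b := bc (lam / (2 * c)) m N in
  LL d c m b N 0 = 0 /\ LL d c m b N 1 = 0 /\ LL d c m b N (S (S k)) = lam ^ (2 * N) * b k.
Proof.
  intros Hl Hc HN Hm Hd b.
  assert (HmN : m + m = INR N) by (rewrite Hm; field).
  assert (Hm0 : 0 < m) by (rewrite Hm; apply le_INR in HN; simpl in HN; lra).
  rewrite !LL_closed by auto.
  split; [unfold b, bc; ring|]. split.
  { replace (m * INR 1 + m) with (INR N) by (simpl; lra). rewrite desc_zero by auto. ring. }
  destruct k as [|k].
  { replace (m * INR 2) with (INR N) by (simpl; lra). rewrite desc_zero by auto. unfold b, bc. ring. }
  set (z := m * INR (S k)).
  assert (Hz : 0 < z) by (unfold z; rewrite S_INR; pose proof (pos_INR k); nra).
  assert (E1 : m * INR (S (S (S k))) = z + INR N) by (unfold z; rewrite !S_INR; lra).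
  unfold b, bc. fold z. rewrite E1.
  assert (G1 : Gamma (z + INR N) = Gamma z * desc (z + INR N) N).
  { rewrite (Gamma_desc N (z + INR N)) by lra. f_equal. f_equal. ring. }
  assert (G2 : Gamma (z + INR N + m) = Gamma (z + m) * desc (z + INR N + m) N).
  { rewrite (Gamma_desc N (z + INR N + m)) by lra. f_equal. f_equal. ring. }
  rewrite G1, G2.
  assert (P1 : 0 < desc (z + INR N) N) by (apply desc_pos; lra).
  assert (P2 : 0 < desc (z + INR N + m) N) by (apply desc_pos; lra).
  assert (P3 : 0 < Gamma z) by (apply Gamma_pos; lra).
  assert (P4 : 0 < Gamma (z + m)) by (apply Gamma_pos; lra).
  replace (S (S (S k)) * N)%nat with (S k * N + N * 2)%nat by lia.
  rewrite pow_add, pow_mult.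
  replace ((4 * c ^ 2) ^ N) with ((4 * c^2) ^ N) by reflexivity.
  replace (lam ^ (2 * N)) with ((4 * c ^ 2) ^ N * ((lam / (2 * c)) ^ 2) ^ N).
  2:{ rewrite <- Rpow_mult_distr. rewrite pow_mult. f_equal. field. lra. }
  rewrite <- (pow_mult (lam / (2 * c)) 2 N). replace (2 * N)%nat with (N * 2)%nat by lia.
  revert P1 P2 P3 P4.
  generalize (Gamma z) (Gamma (z + m)) (desc (z + INR N) N) (desc (z + INR N + m) N)
    ((lam / (2 * c)) ^ (N * 2)) (((lam / (2 * c)) ^ S k) ^ N) ((4 * c ^ 2) ^ N).
  intros. field. repeat split; lra.
Qed.

Lemma Phi_LL d c m lam N s : 0 < lam -> 0 < c -> (1 <= N)%nat -> m = INR N / 2 -> INR d + 1 = 2 * m + 2 ->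
  0 < s ->
  Phi m (LL d c m (bc (lam / (2 * c)) m N) N) (-1 - INR N) s =
  lam ^ (2 * N) * Phi m (bc (lam / (2 * c)) m N) (-1) s.
Proof.
  intros Hl Hc HN Hm Hd Hs.
  set (b := bc (lam / (2 * c)) m N).
  unfold Phi. set (w := Rpower s m).
  assert (HP : PSeries (LL d c m b N) w = w * (w * PSeries (fun k => lam ^ (2 * N) * b k) w)).
  { rewrite <- !PSeries_incr_1. apply PSeries_ext. intros [|[|k]].
    - destruct (LL_bc d c m lam N 0 Hl Hc HN Hm Hd) as [H0 _]. exact H0.
    - destruct (LL_bc d c m lam N 0 Hl Hc HN Hm Hd) as [_ [H1 _]]. exact H1.
    - destruct (LL_bc d c m lam N k Hl Hc HN Hm Hd) as [_ [_ H2]]. exact H2. }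
  rewrite HP, PSeries_scal'.
  assert (Hw : Rpower s (-1 - INR N) * (w * w) = Rpower s (-1)).
  { unfold w. rewrite <- !Rpower_plus. f_equal. lra. }
  transitivity (Rpower s (-1 - INR N) * (w * w) * lam ^ (2 * N) * PSeries b w). ring.
  rewrite Hw. ring.
Qed.


Lemma T_series r m N s : 0 < r -> (1 <= N)%nat -> m = INR N / 2 -> 0 < s ->
  is_series (fun k => r ^ (S k * N) * Rpower s (INR (S k) / 2 * INR N - 1) /
      (Gamma (INR (S k) / 2 * INR N) * Gamma (INR N / 2 * INR (S k + 1))))
    (Phi m (bc r m N) (-1) s).
Proof.
  intros Hr HN Hm Hs.
  set (b := bc r m N). set (w := Rpower s m).
  assert (Hb : good b) by (apply good_bc; auto).
  assert (H1 : is_series (fun k => b k * w ^ k) (PSeries b w)).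
  { apply is_pseries_R. apply PSeries_correct. apply good_ex; auto. }
  assert (H2 : is_series (fun k => b (S k) * w ^ (S k)) (PSeries b w)).
  { apply (is_series_incr_1 (fun k => b k * w ^ k)).
    match goal with |- is_series _ ?l => replace l with (PSeries b w) end. exact H1.
    unfold plus; simpl. unfold b, bc. req. ring. }
  assert (H3 := is_series_scal_l (Rpower s (-1)) _ _ H2).
  unfold Phi. fold w b.
  eapply is_series_ext; [|exact H3].
  intros k. unfold scal; cbn -[INR pow Gamma Rpower]; unfold mult; cbn -[INR pow Gamma Rpower].
  unfold b, bc.
  replace (INR (S k) / 2 * INR N) with (m * INR (S k)) by (rewrite Hm; field).
  replace (INR N / 2 * INR (S (k + 1))) with (m * INR (S k) + m) by (rewrite Hm, !S_INR, plus_INR; simpl; field).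
  assert (Hw : Rpower s (-1) * w ^ S k = Rpower s (m * INR (S k) - 1)).
  { unfold w. rewrite <- Rpower_pow by apply Rpower_pos. rewrite Rpower_mult, <- Rpower_plus.
    f_equal. ring. }
  rewrite <- Hw. unfold Rdiv. ring.
Qed.

Lemma dup_inv M : (1 <= M)%nat ->
  Gamma (INR M / 2 + / 2) = Gamma (/ 2) * Gamma (INR M) / (Gamma (INR M / 2) * 2 ^ (M - 1)).
Proof.
  intros HM. pose proof (dup_aux M HM).
  assert (0 < Gamma (INR M / 2)) by (apply Gamma_pos; apply le_INR in HM; simpl in HM; lra).
  assert (0 < 2 ^ (M - 1)) by (apply pow_lt; lra).
  revert H H0 H1. generalize (Gamma (INR M / 2)) (Gamma (INR M / 2 + / 2)) (Gamma (/2)) (Gamma (INR M)) (2 ^ (M-1)).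
  intros. rewrite <- H. field. lra.
Qed.

Lemma ML2_good N : (1 <= N)%nat -> good (fun k => / Gamma (INR N * INR k + INR N)).
Proof.
  intros HN. assert (HN1 : 1 <= INR N) by (apply le_INR in HN; simpl in HN; lra).
  apply (good_dal _ 1).
  - intros k. apply Rinv_neq_0_compat, Rgt_not_eq, Gamma_pos. pose proof (pos_INR k). nra.
  - exists 0%nat. intros k _.
    set (z := INR N * INR k + INR N).
    assert (Hz : 1 <= z) by (unfold z; pose proof (pos_INR k); nra).
    assert (E : INR N * INR (S k) + INR N = z + INR N) by (unfold z; rewrite S_INR; ring).
    rewrite E.
    assert (G : Gamma (z + INR N) = Gamma z * desc (z + INR N) N).
    { rewrite (Gamma_desc N (z + INR N)) by lra. f_equal. f_equal. ring. }
    rewrite G.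
    assert (P1 : 0 < Gamma z) by (apply Gamma_pos; lra).
    assert (Dg : z <= desc (z + INR N) N).
    { destruct (desc_ge N (z + INR N)) as [_ H]. replace (z + INR N - INR N) with z by ring. lra.
      replace z with (z + INR N - INR N) at 1 by ring. apply H; auto. }
    assert (Hz2 : INR (S k) <= z) by (unfold z; rewrite S_INR; pose proof (pos_INR k); nra).
    replace (/ (Gamma z * desc (z + INR N) N) / / Gamma z) with (/ desc (z + INR N) N).
    2:{ field. split; lra. }
    rewrite Rabs_right by (left; apply Rinv_0_lt_compat; lra).
    rewrite Rmult_1_l. apply Rinv_le_contravar. apply lt_0_INR; lia. lra.
Qed.

Lemma Series_pos (a : nat -> R) : ex_series a -> (forall n, 0 <= a n) -> 0 < a 0%nat -> 0 < Series a.
Proof.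
  intros He Hp H0. rewrite Series_incr_1 by auto.
  assert (0 <= Series (fun k => a (S k))).
  { replace 0 with (Series (fun _ => 0)).
    apply Series_le. intros; split; auto. lra.
    apply (ex_series_incr_1 a); auto.
    rewrite (Series_ext _ (fun n => 0 * a n)) by (intros; ring).
    rewrite Series_scal_l. ring. }
  lra.
Qed.

Lemma ML2_pos N y : (1 <= N)%nat -> 0 < y -> 0 < ML2 (INR N) (INR N) y.
Proof.
  intros HN Hy. unfold ML2.
  assert (HN1 : 1 <= INR N) by (apply le_INR in HN; simpl in HN; lra).
  apply Series_pos.
  - apply (ex_series_ext (fun k => (fun k => / Gamma (INR N * INR k + INR N)) k * y ^ k)).
    intros; unfold Rdiv; req; ring.
    apply ex_pseries_R. apply good_ex. apply ML2_good; auto.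
  - intros n. left. apply Rdiv_lt_0_compat. apply pow_lt; auto. apply Gamma_pos. pose proof (pos_INR n); nra.
  - apply Rdiv_lt_0_compat. apply pow_lt; auto. apply Gamma_pos. simpl. lra.
Qed.


Lemma ML4_ML2 N y : (1 <= N)%nat ->
  Series (fun k => ((y / 2) ^ N) ^ k /
    (Gamma (INR (k + 1) / 2 * INR N + / 2) * Gamma (INR N / 2 * INR (k + 1)))) =
  2 ^ (N - 1) / Gamma (/ 2) * ML2 (INR N) (INR N) (y ^ N).
Proof.
  intros HN. unfold ML2. rewrite <- Series_scal_l. apply Series_ext. intros k.
  set (M := ((k + 1) * N)%nat).
  assert (HM : (1 <= M)%nat) by (unfold M; nia).
  assert (E1 : INR (k + 1) / 2 * INR N = INR M / 2) by (unfold M; rewrite mult_INR; field).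
  assert (E2 : INR N / 2 * INR (k + 1) = INR M / 2) by (unfold M; rewrite mult_INR; field).
  assert (E3 : INR N * INR k + INR N = INR M) by (unfold M; rewrite mult_INR, plus_INR; simpl; ring).
  rewrite E1, E2, E3, dup_inv by auto.
  assert (P1 : 0 < Gamma (INR M / 2)) by (apply Gamma_pos; apply le_INR in HM; simpl in HM; lra).
  assert (P2 : 0 < Gamma (/ 2)) by (apply Gamma_pos; lra).
  assert (P3 : 0 < Gamma (INR M)) by (apply Gamma_pos; apply le_INR in HM; simpl in HM; lra).
  assert (E4 : 2 ^ (M - 1) = 2 ^ (N * k) * 2 ^ (N - 1)) by (rewrite <- pow_add; f_equal; unfold M; nia).
  rewrite E4. rewrite <- !pow_mult. replace ((y / 2) ^ (N * k)) with (y ^ (N * k) / 2 ^ (N * k)) by (unfold Rdiv; rewrite Rpow_mult_distr, pow_inv; reflexivity).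
  assert (P4 : 0 < 2 ^ (N * k)) by (apply pow_lt; lra).
  assert (P5 : 0 < 2 ^ (N - 1)) by (apply pow_lt; lra).
  revert P1 P2 P3 P4 P5.
  generalize (Gamma (INR M / 2)) (Gamma (/ 2)) (Gamma (INR M)) (2 ^ (N * k)) (2 ^ (N - 1)) (y ^ (N * k)).
  intros. field. lra.
Qed.


Lemma term_eq d c lam x t k : (2 <= d)%nat -> 0 < c -> 0 < lam -> 0 < t ->
  let N := (d - 1)%nat in
  let s := c ^ 2 * t ^ 2 - norm_d d x ^ 2 in
  p_cond d c x t (S k) * probN d lam t (S k) =
  / (Rpower PI (INR d / 2) * (c * t) ^ (d - 2) *
     (2 ^ (N - 1) / Gamma (/ 2) * ML2 (INR N) (INR N) ((lam * t) ^ N))) *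
  ((lam / (2 * c)) ^ (S k * N) * Rpower s (INR (S k) / 2 * INR N - 1) /
     (Gamma (INR (S k) / 2 * INR N) * Gamma (INR N / 2 * INR (S k + 1)))).
Proof.
  intros Hd Hc Hl Ht N s.
  assert (HN : (1 <= N)%nat) by (unfold N; lia).
  unfold p_cond, probN. fold N. fold s.
  set (n := S k).
  set (M := ((n + 1) * N)%nat).
  assert (HM : (1 <= M)%nat) by (unfold M; nia).
  assert (E1 : INR (n + 1) / 2 * INR N = INR M / 2) by (unfold M; rewrite mult_INR; field).
  assert (E2 : INR N / 2 * INR (n + 1) = INR M / 2) by (unfold M; rewrite mult_INR; field).
  replace (S k + 1)%nat with (n + 1)%nat by reflexivity.
  rewrite E1, E2. fold M. rewrite dup_inv by auto.
  assert (Hd2 : (d - 2 = N - 1)%nat) by (unfold N; lia).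
  rewrite Hd2.
  assert (E3 : ((n + 1) * N - 1 = n * N + (N - 1))%nat) by (unfold n; nia).
  fold M. replace (M - 1)%nat with (n * N + (N - 1))%nat by (unfold M; nia).
  rewrite !pow_add.
  rewrite !(Rpow_mult_distr c t), (Rpow_mult_distr lam t (n * N)).
  replace ((lam / (2 * c)) ^ (n * N)) with (lam ^ (n * N) / (2 ^ (n * N) * c ^ (n * N)))
    by (unfold Rdiv; rewrite Rpow_mult_distr, pow_inv, Rpow_mult_distr; reflexivity).
  replace (S k * N)%nat with (n * N)%nat by reflexivity.
  assert (HN1 : 1 <= INR N) by (apply le_INR in HN; simpl in HN; lra).
  assert (P1 : 0 < Gamma (INR M / 2)) by (apply Gamma_pos; apply le_INR in HM; simpl in HM; lra).
  assert (P2 : 0 < Gamma (/ 2)) by (apply Gamma_pos; lra).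
  assert (P3 : 0 < Gamma (INR M)) by (apply Gamma_pos; apply le_INR in HM; simpl in HM; lra).
  assert (P4 : 0 < Gamma (INR n / 2 * INR N)) by (apply Gamma_pos; unfold n; rewrite S_INR; pose proof (pos_INR k); nra).
  assert (P5 : 0 < ML2 (INR N) (INR N) ((lam * t) ^ N)) by (apply ML2_pos; auto; apply pow_lt; nra).
  assert (P6 : 0 < Rpower PI (INR d / 2)) by apply Rpower_pos.
  assert (P7 : 0 < 2 ^ (n * N)) by (apply pow_lt; lra).
  assert (P8 : 0 < 2 ^ (N - 1)) by (apply pow_lt; lra).
  assert (P9 : 0 < c ^ (n * N)) by (apply pow_lt; lra).
  assert (P10 : 0 < t ^ (n * N)) by (apply pow_lt; lra).
  assert (P11 : 0 < c ^ (N - 1)) by (apply pow_lt; lra).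
  assert (P12 : 0 < t ^ (N - 1)) by (apply pow_lt; lra).
  revert P1 P2 P3 P4 P5 P6 P7 P8 P9 P10 P11 P12.
  generalize (Gamma (INR M / 2)) (Gamma (/ 2)) (Gamma (INR M)) (Gamma (INR n / 2 * INR N))
    (ML2 (INR N) (INR N) ((lam * t) ^ N)) (Rpower PI (INR d / 2)) (2 ^ (n * N)) (2 ^ (N - 1))
    (c ^ (n * N)) (t ^ (n * N)) (c ^ (N - 1)) (t ^ (N - 1)) (Rpower s (INR n / 2 * INR N - 1))
    (lam ^ (n * N)).
  intros. field. repeat split; lra.
Qed.


Lemma norm_sq d x : norm_d d x ^ 2 = sum_lt d (fun j => x j ^ 2).
Proof.
  unfold norm_d. simpl. rewrite Rmult_1_r. apply sqrt_sqrt. apply sum_lt_nonneg.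
  intros; apply pow2_ge_0.
Qed.

Lemma cone_U d c x t : 0 < c -> (cone d c x t <-> U d c x t).
Proof.
  intros Hc. unfold cone, U, Sf. rewrite <- norm_sq.
  pose proof (sqrt_pos (sum_lt d (fun j => x j ^ 2))) as Hn. fold (norm_d d x) in Hn.
  split; intros [Ht H]; split; auto.
  - assert (0 < c * t) by nra. nra.
  - assert (0 < c * t) by nra. nra.
Qed.

Lemma f_phi d c lam x t : (2 <= d)%nat -> 0 < c -> 0 < lam -> cone d c x t ->
  f_fun d c lam x t = Phi (INR (d - 1) / 2) (bc (lam / (2 * c)) (INR (d - 1) / 2) (d - 1))
     (-1) (c ^ 2 * t ^ 2 - norm_d d x ^ 2).
Proof.
  intros Hd Hc Hl Hcone.
  assert (HU := proj1 (cone_U d c x t Hc) Hcone). destruct HU as [Ht HS].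
  assert (Hs : 0 < c ^ 2 * t ^ 2 - norm_d d x ^ 2) by (rewrite norm_sq; exact HS).
  set (N := (d - 1)%nat).
  assert (HN : (1 <= N)%nat) by (unfold N; lia).
  assert (HT := T_series (lam / (2 * c)) (INR N / 2) N (c ^ 2 * t ^ 2 - norm_d d x ^ 2)
    ltac:(apply Rdiv_lt_0_compat; lra) HN eq_refl Hs).
  unfold f_fun. fold N.
  assert (H4 : ML4 d ((lam * t / 2) ^ N) = 2 ^ (N - 1) / Gamma (/ 2) * ML2 (INR N) (INR N) ((lam * t) ^ N)).
  { unfold ML4. fold N. apply ML4_ML2; auto. }
  rewrite H4.
  unfold pX.
  rewrite (Series_ext _ _ (fun k => term_eq d c lam x t k Hd Hc Hl Ht)).
  rewrite Series_scal_l. fold N.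
  rewrite (is_series_unique _ _ HT).
  assert (P5 : 0 < ML2 (INR N) (INR N) ((lam * t) ^ N)) by (apply ML2_pos; auto; apply pow_lt; nra).
  assert (P2 : 0 < Gamma (/ 2)) by (apply Gamma_pos; lra).
  assert (P6 : 0 < Rpower PI (INR d / 2)) by apply Rpower_pos.
  assert (P7 : 0 < (c * t) ^ (d - 2)) by (apply pow_lt; nra).
  assert (P8 : 0 < 2 ^ (N - 1)) by (apply pow_lt; lra).
  revert P5 P2 P6 P7 P8.
  generalize (ML2 (INR N) (INR N) ((lam * t) ^ N)) (Gamma (/ 2)) (Rpower PI (INR d / 2)) ((c * t) ^ (d - 2)) (2 ^ (N - 1)).
  intros. field. repeat split; lra.
Qed.

Lemma Sm_iter d c m u : Sm d c m u -> forall l, List.Forall (valid_dir d) l -> Sm d c m (iter_partial l u).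
Proof.
  intros Hu l. induction l as [|o l IH]; intros Hl; simpl; auto.
  inversion Hl; subst. apply (Sm_partial d c m _ (IH H2) o H1).
Qed.

Theorem theorem3p1 (d : nat) (c lam : R) :
  (2 <= d)%nat -> 0 < c -> 0 < lam ->
  (forall (x : nat -> R) (t : R), cone d c x t ->
     is_series
       (fun k => (lam / (2 * c)) ^ (S k * (d - 1)) *
          Rpower (c ^ 2 * t ^ 2 - norm_d d x ^ 2) (INR (S k) / 2 * INR (d - 1) - 1) /
          (Gamma (INR (S k) / 2 * INR (d - 1)) * Gamma (INR (d - 1) / 2 * INR (S k + 1))))
       (f_fun d c lam x t))
  /\ smooth_on d (cone d c) (f_fun d c lam)
  /\ (forall (x : nat -> R) (t : R), cone d c x t ->
        wave_op_iter (d - 1) d c (f_fun d c lam) x t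
        = lam ^ (2 * (d - 1)) * f_fun d c lam x t).
Proof.
  intros Hd Hc Hl.
  assert (HN : (1 <= d - 1)%nat) by lia.
  assert (Hr : 0 < lam / (2 * c)) by (apply Rdiv_lt_0_compat; lra).
  assert (Hb : good (bc (lam / (2 * c)) (INR (d - 1) / 2) (d - 1))) by (apply good_bc; auto).
  assert (Hf : forall x t, U d c x t -> f_fun d c lam x t =
     Phi (INR (d - 1) / 2) (bc (lam / (2 * c)) (INR (d - 1) / 2) (d - 1)) (-1) (Sf d c x t)).
  { intros x t HU. rewrite f_phi; auto. unfold Sf. rewrite norm_sq. reflexivity.
    apply cone_U; auto. }
  split; [|split].
  - intros x t Hcone. rewrite f_phi by auto.
    apply T_series; auto.
    assert (HU := proj1 (cone_U d c x t Hc) Hcone). destruct HU as [Ht HS].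
    rewrite norm_sq. exact HS.
  - intros l o Hlo x t Hcone.
    assert (HU := proj1 (cone_U d c x t Hc) Hcone).
    assert (Sf0 : Sm d c (INR (d - 1) / 2) (f_fun d c lam)).
    { apply (Sm_ext _ _ _ _ _ (Sm_phi d c (INR (d - 1) / 2) _ (-1) Hb)).
      intros x' t' HU'. symmetry. apply Hf; auto. }
    inversion Hlo; subst.
    apply (Sm_partial d c _ _ (Sm_iter d c _ _ Sf0 l H2) o H1); auto.
  - intros x t Hcone.
    assert (HU := proj1 (cone_U d c x t Hc) Hcone).
    rewrite (wave_iter d c (INR (d - 1) / 2) _ _ Hb Hf (d - 1) x t HU).
    rewrite Phi_LL; auto.
    rewrite Hf; auto.
    rewrite minus_INR by lia. simpl. lra.
    destruct HU; auto.
Qed.
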